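(* Let $\nu\ge 1$, let $n_1,\dots,n_\nu\ge 0$ be integers, $N=n_1+\dots+n_\nu$, and let $\Omega=\coprod_{j=1}^{\nu}P_j$ be a set with $N$ elements partitioned into disjoint subsets with $\#P_j=n_j$. Let $S_N$ be the group of permutations of $\Omega$ and $Y\{n_j\}\subset S_N$ the Young subgroup of permutations sending each $P_j$ to itself. In the algebra $\Delta\{n_j\}$ (notation in the context), for any two admissible matrices $\{a_{ij}\}$ and $\{b_{jk}\}$ we have $$\Xi\{a_{ij}\}\cdot \Xi\{b_{jk}\}=\sum_{\{c_{ik}\}}\frac{\prod_{i,j} a_{ij}!\,\prod_{j,k} b_{jk}!}{\prod_j n_j!}\left(\sum_{\{t_{ijk}\}}\frac{1}{\prod_{i,j,k}t_{ijk}!}\right)\Xi\{c_{ik}\},$$ where the outer sum is over all admissible matrices $\{c_{ik}\}$, and the inner sum is over all collections of integers $t_{ijk}\ge 0$ ($i,j,k=1,\dots,\nu$) such that $\sum_i t_{ijk}=b_{jk}$, $\sum_j t_{ijk}=c_{ik}$, $\sum_k t_{ijk}=a_{ij}$ for all indices.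
   Context: An admissible matrix is a $\nu\times\nu$ matrix $\{a_{ij}\}$ of nonnegative integers with $\sum_i a_{ij}=n_j$ for all $j$ and $\sum_j a_{ij}=n_i$ for all $i$. Each double coset $Y\{n_j\}\,g\,Y\{n_j\}$ is determined by the admissible matrix $a_{ij}=\#(g(P_i)\cap P_j)$, and every admissible matrix arises this way; denote this double coset by $\xi\{a_{ij}\}$. Its cardinality is $\mu\{a_{ij}\}=\prod_j (n_j!)^2/\prod_{i,j}a_{ij}!$. Let $\Pi=\frac{1}{\prod_j n_j!}\sum_{h\in Y\{n_j\}}h\in\mathbb{C}[S_N]$ and $\Delta\{n_j\}=\Pi\,\mathbb{C}[S_N]\,\Pi$, the subalgebra of the group algebra of elements invariant under left and right multiplication by $Y\{n_j\}$. It has basis $\Xi\{a_{ij}\}=\frac{1}{\mu\{a_{ij}\}}\sum_{g\in\xi\{a_{ij}\}}g$, indexed by admissible matrices. *)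

(* Defs.v *)
From HB Require Import structures.
From mathcomp Require Import all_boot all_order all_algebra all_fingroup.
From mathcomp Require Import algC.
Set Implicit Arguments. Unset Strict Implicit. Unset Printing Implicit Defensive.
Import GRing.Theory Num.Theory.
Local Open Scope ring_scope.

(* Omega is a finite type T; the partition Omega = coprod_j P_j is given by
   the block map p : T -> 'I_nu, i.e. P_j = [set x | p x == j]. *)

Definition young (T : finType) (nu : nat) (p : T -> 'I_nu) : {set {perm T}} :=
  [set s : {perm T} | [forall x, p (s x) == p x]].

Definition pmat (T : finType) (nu : nat) (p : T -> 'I_nu) (g : {perm T})
  (i j : 'I_nu) : nat := #|[set x | (p x == i) && (p (g x) == j)]|.

Definition admissible (nu : nat) (n : 'I_nu -> nat) (a : 'I_nu -> 'I_nu -> nat)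
  : bool :=
  [forall j, (\sum_i a i j == n j)%N] && [forall i, (\sum_j a i j == n i)%N].

Definition dcoset (T : finType) (nu : nat) (p : T -> 'I_nu)
  (a : 'I_nu -> 'I_nu -> nat) : {set {perm T}} :=
  [set g : {perm T} | [forall i, forall j, pmat p g i j == a i j]].

(* the group algebra C[S_N]: an element is sum_s f(s) s *)
Notation galg T := {ffun {perm T} -> algC}.

(* product in C[S_N]; mathcomp's product of permutations (s * t) x = t (s x) *)
Definition gmul (T : finType) (f g : galg T) : galg T :=
  [ffun s : {perm T} => \sum_(t : {perm T}) f t * g (t^-1 * s)%g].

Definition Xi (T : finType) (nu : nat) (p : T -> 'I_nu)
  (a : 'I_nu -> 'I_nu -> nat) : galg T :=
  [ffun s : {perm T} => if s \in dcoset p a then (#|dcoset p a|%:R)^-1 else 0].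

(* bounded matrices, used to index the finite sums *)
Definition mat_of (nu m : nat) (c : {ffun 'I_nu * 'I_nu -> 'I_m})
  (i k : 'I_nu) : nat := c (i, k).

Definition tcond (nu m : nat) (a b c : 'I_nu -> 'I_nu -> nat)
  (t : {ffun 'I_nu * 'I_nu * 'I_nu -> 'I_m}) : bool :=
  [&& [forall j, forall k, (\sum_i (t (i, j, k) : nat) == b j k)%N],
      [forall i, forall k, (\sum_j (t (i, j, k) : nat) == c i k)%N] &
      [forall i, forall j, (\sum_k (t (i, j, k) : nat) == a i j)%N]].

(* Main.v *)
Require Import Defs.
From HB Require Import structures.
From mathcomp Require Import all_boot all_order all_algebra all_fingroup.
From mathcomp Require Import algC.
Set Implicit Arguments. Unset Strict Implicit. Unset Printing Implicit Defensive.

Lemma sum_card_fiber (U V : finType) (S : {set U}) (g : U -> V) :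
  #|S| = (\sum_v #|[set u in S | g u == v]|)%N.
Proof.
rewrite -sum1_card (partition_big g predT) //; apply: eq_bigr => v _.
by rewrite sum1dep_card.
Qed.

Lemma sum_bool_eq (V : finType) (k : V) (b : bool) :
  (\sum_k' ((b && (k == k')) : nat))%N = b.
Proof.
rewrite (bigD1 k) //= eqxx andbT big1 ?addn0 // => k' nk.
by rewrite eq_sym (negbTE nk) andbF.
Qed.

Lemma prod_fact_split (I : finType) (i0 : I) (u : I -> nat) :
  (\prod_i (((i0 == i) : nat) + u i)`! = (u i0).+1 * \prod_i (u i)`!)%N.
Proof.
rewrite (bigD1 i0) //= [in RHS](bigD1 i0) //= eqxx add1n factS mulnA.
congr (_ * _); apply: eq_bigr => i ni; by rewrite eq_sym (negbTE ni).
Qed.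

Section B.
Variables (T L K : finType) (q : T -> L) (d : T -> K).

Definition tensA (A : {set T}) (f : T -> K) l k :=
  #|[set x in A | (q x == l) && (f x == k)]|.

Definition Cset (A : {set T}) (t : L -> K -> nat) :=
  [set f : {ffun T -> K} | [forall x, (x \notin A) ==> (f x == d x)] &&
     [forall l, forall k, tensA A f l k == t l k]].

Lemma card_fiber (A : {set T}) (P : pred T) x : x \in A ->
  #|[set y in A | P y]| = P x + #|[set y in A :\ x | P y]|.
Proof.
move=> xA; rewrite (cardsD1 x) inE xA andTb; congr (_ + _).
by apply: eq_card => y; rewrite !inE andbA.
Qed.

Lemma B_gen n : forall (A : {set T}) (t : L -> K -> nat), #|A| = n ->
  (forall l, \sum_k t l k = #|[set x in A | q x == l]|) ->
  (#|Cset A t| * \prod_l \prod_k (t l k)`! = \prod_l #|[set x in A | q x == l]|`!)%N.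
Proof.
elim: n => [|n IH] A t cA ht.
  have A0 : A = set0 by apply/eqP; rewrite -cards_eq0 cA.
  subst A.
  have e0 : forall l, #|[set x in set0 | q x == l]| = 0%N.
    by move=> l; apply/eqP; rewrite cards_eq0; apply/eqP/setP=> x; rewrite !inE.
  have t0 : forall l k, t l k = 0%N.
    move=> l k; have := ht l; rewrite e0 => /eqP; rewrite sum_nat_eq0.
    by move=> /forallP /(_ k) /eqP.
  have -> : Cset set0 t = [set finfun d].
    apply/setP=> f; rewrite !inE; apply/idP/idP.
      move=> /andP[/forallP H _]; apply/eqP/ffunP=> x; rewrite ffunE.
      by have := H x; rewrite inE /= => /eqP.
    move=> /eqP ->; apply/andP; split; apply/forallP=> x.
      by rewrite ffunE eqxx implybT.
    apply/forallP=> k; rewrite t0; apply/eqP/eqP; rewrite cards_eq0; apply/eqP/setP=> y.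
    by rewrite !inE.
  rewrite cards1 mul1n [RHS]big1 // => [|l _]; last by rewrite e0.
  by rewrite big1 // => l _; rewrite big1 // => k _; rewrite t0.
have [x xA] : exists x, x \in A.
  by apply/set0Pn; rewrite -card_gt0 cA.
set A' := A :\ x.
have cA' : #|A'| = n by move: cA; rewrite (cardsD1 x) xA add1n => -[].
set l0 := q x.
pose upd (f : {ffun T -> K}) v := [ffun y => if y == x then v else f y].
have tens_upd f v l k : tensA A' (upd f v) l k = tensA A' f l k.
  apply: eq_card => y; rewrite !inE ffunE.
  by case: (y =P x) => //= ->; rewrite eqxx.
have tens_split (f : {ffun T -> K}) l k : tensA A f l k =
    ((l0 == l) && (f x == k)) + tensA A' f l k.
  by rewrite /tensA (card_fiber _ xA).
pose tm k := fun l k' => if (l == l0) && (k' == k) then (t l k').-1 else t l k'.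
have tmE k l k' : (0 < t l0 k)%N ->
    t l k' = ((l0 == l) && (k == k')) + tm k l k'.
  move=> tpos; rewrite /tm; case: (l0 =P l) => [<-|/eqP nl] /=.
    case: (k =P k') => [<-|/eqP nk] /=; first by rewrite !eqxx /= add1n prednK.
    by rewrite eq_sym (negbTE nk) andbF.
  by rewrite eq_sym (negbTE nl).
have key k : #|[set f in Cset A t | f x == k]| =
    if (0 < t l0 k)%N then #|Cset A' (tm k)| else 0%N.
  case: ifP => tpos; last first.
    apply/eqP; rewrite cards_eq0; apply/eqP/setP=> f; rewrite !inE.
    apply/negbTE/negP=> /andP[/andP[_ /forallP /(_ l0) /forallP /(_ k) /eqP E]] fx.
    by move: tpos; rewrite -E tens_split eqxx fx.
  have -> : [set f in Cset A t | f x == k] = (fun f => upd f k) @: Cset A' (tm k).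
    apply/setP=> f; rewrite !inE; apply/idP/idP.
      move=> /andP[/andP[/forallP Hd /forallP Ht] /eqP fx].
      apply/imsetP; exists (upd f (d x)).
        rewrite inE; apply/andP; split; apply/forallP=> y.
          apply/implyP=> yA; rewrite ffunE; case: (y =P x) => [->|/eqP nyx]; first exact: eqxx.
          have yA2 : y \notin A by move: yA; rewrite /A' !inE nyx.
          by have := Hd y; rewrite yA2.
        apply/forallP=> k'; rewrite tens_upd.
        have := Ht y => /forallP /(_ k') /eqP; rewrite (tmE k) // tens_split fx.
        by move=> /eqP; rewrite eqn_add2l.
      by apply/ffunP=> y; rewrite !ffunE; case: (y =P x) => [->|] //; rewrite eqxx.
    move=> /imsetP[g]; rewrite inE => /andP[/forallP Hd /forallP Ht] ->.
    have fx : upd g k x = k by rewrite ffunE eqxx.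
    rewrite fx eqxx andbT; apply/andP; split; apply/forallP=> y.
      apply/implyP=> yA; rewrite ffunE.
      have nyx : (y == x) = false by apply/negbTE; apply: contraNneq yA => ->.
      rewrite nyx; have := Hd y; rewrite !inE nyx /= yA /= => /eqP ->; exact: eqxx.
    apply/forallP=> k'; rewrite tens_split tens_upd fx (tmE k _ _ tpos).
    by have := Ht y => /forallP /(_ k') /eqP ->.
  rewrite card_in_imset // => g1 g2; rewrite !inE => /andP[/forallP H1 _] /andP[/forallP H2 _] e.
  apply/ffunP=> y; case: (y =P x) => [->|/eqP nyx].
    have := H1 x; have := H2 x; rewrite !inE eqxx /= => /eqP -> /eqP -> //.
  by have := congr1 (fun f : {ffun T -> K} => f y) e; rewrite !ffunE (negbTE nyx).
set R' := (\prod_l #|[set y in A' | q y == l]|`!)%N.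
have cardA l : #|[set y in A | q y == l]| = ((l0 == l) : nat) + #|[set y in A' | q y == l]|.
  by rewrite (card_fiber _ xA).
have -> : (\prod_l #|[set y in A | q y == l]|`! = #|[set y in A | q y == l0]| * R')%N.
  under eq_bigr => l _ do rewrite cardA.
  by rewrite prod_fact_split cardA eqxx add1n.
rewrite (sum_card_fiber _ (fun f : {ffun T -> K} => f x)) big_distrl /= -ht big_distrl /=.
apply: eq_bigr => k _; rewrite key; case: ifP => tpos; last first.
  by move/negbT: tpos; rewrite -eqn0Ngt => /eqP ->.
have -> : (\prod_l \prod_k0 (t l k0)`! = t l0 k * \prod_l \prod_k0 (tm k l k0)`!)%N.
  under eq_bigr => l _ do under eq_bigr => k' _ do rewrite (tmE k l k' tpos).
  rewrite (bigD1 l0) //= [in RHS](bigD1 l0) //= mulnA; congr (_ * _).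
    rewrite eqxx /=.
    by rewrite prod_fact_split (tmE k l0 k tpos) !eqxx.
  apply: eq_bigr => l nl; apply: eq_bigr => k' _.
  by rewrite eq_sym (negbTE nl).
rewrite mulnCA IH //.
move=> l; apply/eqP; rewrite -(eqn_add2l ((l0 == l) : nat)) -cardA -ht.
under [X in _ == X]eq_bigr => k' _ do rewrite (tmE k l k' tpos).
by rewrite big_split /= sum_bool_eq.
Qed.
End B.

Lemma B_full (T L K : finType) (q : T -> L) (d : T -> K) (t : L -> K -> nat) :
  (forall l, \sum_k t l k = #|[set x | q x == l]|)%N ->
  (#|[set f : {ffun T -> K} | [forall l, forall k,
      #|[set x | (q x == l) && (f x == k)]| == t l k]]|
   * \prod_l \prod_k (t l k)`! = \prod_l #|[set x | q x == l]|`!)%N.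
Proof.
move=> ht.
have eA l : #|[set x in setT | q x == l]| = #|[set x | q x == l]|.
  by apply: eq_card => x; rewrite !inE.
have := @B_gen T L K q d #|[set: T]| [set: T] t erefl.
rewrite (eq_bigr _ (fun l _ => congr1 factorial (eA l))) => <-; last first.
  by move=> l; rewrite eA.
congr (_ * _); apply: eq_card => f; rewrite !inE.
have -> : [forall x, (x \notin setT) ==> (f x == d x)] by apply/forallP => x; rewrite inE.
rewrite /=; apply: eq_forallb => l; apply: eq_forallb => k.
by rewrite /tensA (@eq_card _ _ [set x | (q x == l) && (f x == k)]) // => x; rewrite !inE.
Qed.

Lemma permcount (T K : finType) (p f : T -> K) :
  (forall k, #|[set x | f x == k]| = #|[set x | p x == k]|) ->
  #|[set g : {perm T} | [forall x, p (g x) == f x]]| =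
  (\prod_k #|[set x | p x == k]|`!)%N.
Proof.
move=> hf.
have := @B_full T K T f id (fun k y => ((p y == k) : nat)).
rewrite (eq_bigr _ (fun k _ => congr1 factorial (hf k))) => <-; last first.
  move=> k; rewrite hf -sum1dep_card /=.
  by rewrite [RHS]big_mkcond; apply: eq_bigr => y _; case: (p y == k).
rewrite big1 ?muln1; last by move=> k _; rewrite big1 // => y _; case: (p y == k).
pose phi (g : {perm T}) := [ffun x => g x].
set Fs := [set h : {ffun T -> T} | _].
have -> : Fs = phi @: [set g : {perm T} | [forall x, p (g x) == f x]].
  apply/setP=> h; rewrite inE; apply/idP/idP.
    move=> /forallP Ht.
    have c1 y : #|[set x | h x == y]| = 1%N.
      rewrite (sum_card_fiber _ f).
      rewrite -[RHS]/(nat_of_bool true) -(sum_bool_eq (p y) true); apply: eq_bigr => k _.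
      have := Ht k => /forallP /(_ y) /eqP <-.
      by apply: eq_card => x; rewrite !inE andbC.
    have hinj : injective h.
      move=> x1 x2 e; have [z Hz] := cards1P (introT eqP (c1 (h x1))).
      have : x1 \in [set z] by rewrite -Hz inE.
      have : x2 \in [set z] by rewrite -Hz inE e.
      by rewrite !inE => /eqP -> /eqP ->.
    apply/imsetP; exists (perm hinj).
      rewrite inE; apply/forallP=> x; rewrite permE.
      have := Ht (f x) => /forallP /(_ (h x)) /eqP.
      case: (p (h x) == f x) => // /eqP; rewrite cards_eq0 => /eqP /setP /(_ x).
      by rewrite !inE !eqxx.
    by apply/ffunP=> x; rewrite ffunE permE.
  move=> /imsetP [g]; rewrite inE => /forallP Hg ->.
  apply/forallP=> k; apply/forallP=> y.
  have -> : [set x | (f x == k) && (phi g x == y)] =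
            [set x | (x == (g^-1)%g y) && (p y == k)].
    apply/setP=> x; rewrite !inE ffunE -(eqP (Hg x)).
    have -> : (g x == y) = (x == (g^-1)%g y).
      by apply/eqP/eqP => [<-|->]; rewrite ?permK ?permKV.
    by case: (x =P _) => [->|]; rewrite ?andbF ?andbT // permKV.
  case: (p y == k).
    rewrite (_ : [set x | _] = [set (g^-1)%g y]) ?cards1 //.
    by apply/setP=> x; rewrite !inE andbT.
  by rewrite (_ : [set x | _] = set0) ?cards0 //; apply/setP=> x; rewrite !inE andbF.
rewrite card_imset //.
by move=> g1 g2 e; apply/permP => x; have := congr1 (fun h : {ffun T -> T} => h x) e; rewrite !ffunE.
Qed.

Lemma GL (T L K : finType) (q : T -> L) (p : T -> K) (t : L -> K -> nat) :
  (forall l, \sum_k t l k = #|[set x | q x == l]|)%N ->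
  (forall k, \sum_l t l k = #|[set x | p x == k]|)%N ->
  (#|[set g : {perm T} | [forall l, forall k,
      #|[set x | (q x == l) && (p (g x) == k)]| == t l k]]|
   * \prod_l \prod_k (t l k)`! =
   \prod_l #|[set x | q x == l]|`! * \prod_k #|[set x | p x == k]|`!)%N.
Proof.
move=> hq hp.
rewrite -(B_full p hq).
set Fs := [set f : {ffun T -> K} | _].
set S := [set g : {perm T} | _].
suff -> : #|S| = (#|Fs| * \prod_k #|[set x | p x == k]|`!)%N by rewrite mulnAC.
rewrite (sum_card_fiber _ (fun g : {perm T} => [ffun x => p (g x)])).
rewrite (bigID (fun f => f \in Fs)) /= [X in (_ + X)%N]big1 ?addn0; last first.
  move=> f fF; apply/eqP; rewrite cards_eq0; apply/eqP/setP=> g; rewrite !inE.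
  apply/negbTE/negP => /andP[Hg /eqP ef]; move: fF; rewrite -ef inE.
  apply/negP/negPn; apply: etrans Hg; apply: eq_forallb => l; apply: eq_forallb => k.
  by congr (_ == _); apply: eq_card => x; rewrite !inE ffunE.
rewrite -sum1_card big_distrl /=; apply: eq_bigr => f fF; rewrite mul1n.
move: (fF); rewrite inE => /forallP Hf.
rewrite -(@permcount _ _ p f); last first.
  move=> k; rewrite -hp (sum_card_fiber _ q); apply: eq_bigr => l _.
  have := Hf l => /forallP /(_ k) /eqP <-.
  by apply: eq_card => x; rewrite !inE andbC.
apply: eq_card => g; rewrite !inE.
apply/idP/idP.
  move=> /andP[_ /eqP <-]; apply/forallP => x; rewrite ffunE //.
move=> /forallP Hg.
have ef : [ffun x => p (g x)] = f by apply/ffunP=> x; rewrite ffunE (eqP (Hg x)).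
rewrite ef eqxx andbT; move: fF; rewrite inE; apply: etrans; apply: eq_forallb => l; apply: eq_forallb => k.
by congr (_ == _); apply: eq_card => x; rewrite !inE (eqP (Hg x)).
Qed.

Lemma pmat_row (T : finType) nu (p : T -> 'I_nu) (g : {perm T}) i :
  \sum_j pmat p g i j = #|[set x | p x == i]|.
Proof.
rewrite (sum_card_fiber _ (fun x => p (g x))); apply: eq_bigr => j _.
by apply: eq_card => x; rewrite !inE.
Qed.

Lemma pmat_col (T : finType) nu (p : T -> 'I_nu) (g : {perm T}) j :
  \sum_i pmat p g i j = #|[set x | p x == j]|.
Proof.
rewrite -(card_preimset _ (@perm_inj _ g)) (sum_card_fiber _ p).
by apply: eq_bigr => i _; apply: eq_card => x; rewrite !inE andbC.
Qed.

Lemma mu_lemma (T : finType) nu (n : 'I_nu -> nat) (p : T -> 'I_nu)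
  (hP : forall j : 'I_nu, #|[set x | p x == j]| = n j) b :
  admissible n b ->
  (#|dcoset p b| * \prod_i \prod_j (b i j)`! =
   \prod_j (n j)`! * \prod_j (n j)`!)%N.
Proof.
move=> /andP[/forallP hc /forallP hr].
rewrite -(eq_bigr _ (fun j _ => congr1 factorial (hP j))) -(@GL _ _ _ p p b).
- by congr (_ * _); apply: eq_card => g; rewrite !inE.
- by move=> l; rewrite hP; apply/eqP.
- by move=> k; rewrite hP; apply/eqP.
Qed.

Section D.
Variables (T : finType) (nu : nat) (n : 'I_nu -> nat) (p : T -> 'I_nu).
Hypothesis hP : forall j : 'I_nu, #|[set x | p x == j]| = n j.
Variables (a b : 'I_nu -> 'I_nu -> nat) (s : {perm T}).
Hypotheses (ha : admissible n a) (hb : admissible n b).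

Definition T3 (g : {perm T}) i j k :=
  #|[set x | [&& p x == i, p (g x) == j & p (s x) == k]]|.

Definition Gt (t : {ffun 'I_nu * 'I_nu * 'I_nu -> 'I_#|T|.+1}) :=
  [set g : {perm T} | [forall i, forall j, forall k, T3 g i j k == t (i, j, k)]].

Lemma r1 g i j : \sum_k T3 g i j k = pmat p g i j.
Proof.
rewrite /pmat (sum_card_fiber _ (fun x => p (s x))); apply: eq_bigr => k _.
by apply: eq_card => x; rewrite !inE andbA.
Qed.

Lemma r2 g i k : \sum_j T3 g i j k = pmat p s i k.
Proof.
rewrite /pmat (sum_card_fiber _ (fun x => p (g x))); apply: eq_bigr => j _.
by apply: eq_card => x; rewrite !inE andbA andbAC.
Qed.

Lemma r3 g j k : \sum_i T3 g i j k = pmat p (g^-1 * s)%g j k.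
Proof.
rewrite /pmat -(card_preimset _ (@perm_inj _ g)) (sum_card_fiber _ p).
apply: eq_bigr => i _; apply: eq_card => x; rewrite !inE permM permK.
by rewrite andbC.
Qed.

Lemma T3_lt g i j k : T3 g i j k < #|T|.+1.
Proof. by rewrite ltnS max_card. Qed.

Definition tau g : {ffun 'I_nu * 'I_nu * 'I_nu -> 'I_#|T|.+1} :=
  [ffun ijk => inord (T3 g ijk.1.1 ijk.1.2 ijk.2)].

Lemma tauE g i j k : (tau g (i, j, k) : nat) = T3 g i j k.
Proof. by rewrite ffunE inordK // T3_lt. Qed.

Lemma D1 : #|[set g | (g \in dcoset p a) && ((g^-1 * s)%g \in dcoset p b)]| =
  \sum_(t | tcond a b (pmat p s) t) #|Gt t|.
Proof.
rewrite (sum_card_fiber _ tau) (bigID (tcond a b (pmat p s))) /=.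
rewrite [X in (_ + X)%N]big1 ?addn0; last first.
  move=> t tc; apply/eqP; rewrite cards_eq0; apply/eqP/setP=> g; rewrite !inE.
  apply/negbTE/negP => /andP[/andP[ga gb] /eqP et]; move/negP: tc; apply.
  rewrite -et; apply/and3P; split; apply/forallP=> i; apply/forallP => j.
  - rewrite (eq_bigr (fun i0 => T3 g i0 i j)) => [|i0 _]; last by rewrite tauE.
    by rewrite r3; move: gb => /forallP /(_ i) /forallP /(_ j).
  - rewrite (eq_bigr (fun j0 => T3 g i j0 j)) => [|j0 _]; last by rewrite tauE.
    by rewrite r2.
  - rewrite (eq_bigr (fun k0 => T3 g i j k0)) => [|k0 _]; last by rewrite tauE.
    by rewrite r1; move: ga => /forallP /(_ i) /forallP /(_ j).
apply: eq_bigr => t /and3P [/forallP t1 /forallP t2 /forallP t3].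
apply: eq_card => g; rewrite !inE; apply/idP/idP.
  move=> /andP[_ /eqP <-]; apply/forallP => i; apply/forallP => j; apply/forallP => k.
  by rewrite tauE.
move=> /forallP H.
have ET i j k : T3 g i j k = t (i, j, k).
  by apply/eqP; move: (H i) => /forallP /(_ j) /forallP /(_ k).
have -> : tau g = t.
  apply/ffunP => [[[i j] k]]; apply: val_inj => /=; by rewrite tauE ET.
rewrite eqxx andbT; apply/andP; split; apply/forallP => i; apply/forallP => j.
  rewrite -r1; under eq_bigr => k _ do rewrite ET.
  by move: (t3 i) => /forallP /(_ j).
rewrite -r3; under eq_bigr => k _ do rewrite ET.
by move: (t1 i) => /forallP /(_ j).
Qed.

Lemma D2 t : tcond a b (pmat p s) t ->
  (#|Gt t| * \prod_i \prod_j \prod_k (t (i, j, k))`! =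
   \prod_i \prod_k (pmat p s i k)`! * \prod_j (n j)`!)%N.
Proof.
move=> /and3P [/forallP t1 /forallP t2 /forallP t3].
move: ha => /andP[/forallP hac _].
have := @GL T ('I_nu * 'I_nu)%type 'I_nu (fun x => (p x, p (s x))) p
  (fun l j => (t (l.1, j, l.2) : nat)).
have cq l : #|[set x | (p x, p (s x)) == l]| = pmat p s l.1 l.2.
  by case: l => i k; apply: eq_card => x; rewrite !inE xpair_eqE.
have hyp1 : forall l, \sum_j (t (l.1, j, l.2) : nat) = #|[set x | (p x, p (s x)) == l]|.
  by move=> [i k]; rewrite cq /=; apply/eqP; move: (t2 i) => /forallP /(_ k).
have hyp2 : forall j, \sum_l (t (l.1, j, l.2) : nat) = #|[set x | p x == j]|.
  move=> j; rewrite hP -(pair_bigA _ (fun i k => (t (i, j, k) : nat))) /=.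
  apply/eqP; rewrite -(eqP (hac j)) eq_sym; apply/eqP; apply: eq_bigr => i _.
  by apply/eqP; rewrite eq_sym; move: (t3 i) => /forallP /(_ j).
move=> /(_ hyp1 hyp2) H.
rewrite -(eq_bigr _ (fun j _ => congr1 factorial (hP j))).
have -> : (\prod_i \prod_k (pmat p s i k)`! =
   \prod_l (#|[set x | (p x, p (s x)) == l]|)`!)%N.
  rewrite (pair_bigA _ (fun i k => (pmat p s i k)`!)).
  by apply: eq_bigr => l _; rewrite cq.
have -> : (\prod_i \prod_j \prod_k (t (i, j, k))`! =
   \prod_l \prod_j (t (l.1, j, l.2))`!)%N.
  rewrite (eq_bigr (fun i => \prod_k \prod_j (t (i, j, k))`!)); last first.
    by move=> i _; rewrite exchange_big.
  by rewrite (pair_bigA _ (fun i k => \prod_j (t (i, j, k))`!)).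
rewrite -H; congr (_ * _).
apply: eq_card => g; rewrite !inE; apply/idP/idP.
  move=> /forallP H1; apply/forallP => [[i k]]; apply/forallP => j.
  move: (H1 i) => /forallP /(_ j) /forallP /(_ k); congr (_ == _).
  by apply: eq_card => x; rewrite !inE xpair_eqE andbAC andbA.
move=> /forallP H1; apply/forallP => i; apply/forallP => j; apply/forallP => k.
move: (H1 (i, k)) => /forallP /(_ j); congr (_ == _).
by apply: eq_card => x; rewrite !inE xpair_eqE andbAC andbA.
Qed.

End D.

Import GRing.Theory Num.Theory.
From mathcomp.algebra_tactics Require Import ring.
Local Open Scope ring_scope.

Lemma prodfact_neq0 (I J : finType) (F : I -> J -> nat) :
  ((\prod_i \prod_j (F i j)`!)%N%:R : algC) != 0.
Proof.
rewrite pnatr_eq0 -lt0n; apply: prodn_gt0 => i; apply: prodn_gt0 => j.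
exact: fact_gt0.
Qed.

Lemma prodfact1_neq0 (I : finType) (F : I -> nat) :
  ((\prod_i (F i)`!)%N%:R : algC) != 0.
Proof. by rewrite pnatr_eq0 -lt0n; apply: prodn_gt0 => i; exact: fact_gt0. Qed.

Unset Implicit Arguments.
Theorem proposition1 (nu : nat) (n : 'I_nu -> nat) (T : finType)
  (p : T -> 'I_nu) (hnu : (0 < nu)%N)
  (hP : forall j : 'I_nu, #|[set x | p x == j]| = n j)
  (a b : 'I_nu -> 'I_nu -> nat)
  (ha : admissible n a) (hb : admissible n b) :
  gmul (Xi p a) (Xi p b) =
  [ffun s : {perm T} =>
  \sum_(c : {ffun 'I_nu * 'I_nu -> 'I_(#|T|).+1} | admissible n (mat_of c))
    ((((\prod_i \prod_j (a i j)`!) * (\prod_j \prod_k (b j k)`!))%N%:R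
        / (\prod_j (n j)`!)%N%:R)
     * \sum_(t : {ffun 'I_nu * 'I_nu * 'I_nu -> 'I_(#|T|).+1}
               | tcond a b (mat_of c) t)
         ((\prod_i \prod_j \prod_k (t (i, j, k))`!)%N%:R)^-1)
    * Xi p (mat_of c) s].
Proof.
apply/ffunP => s; rewrite !ffunE.
pose c0 : {ffun 'I_nu * 'I_nu -> 'I_#|T|.+1} := [ffun ik => inord (pmat p s ik.1 ik.2)].
have c0E i k : mat_of c0 i k = pmat p s i k.
  by rewrite /mat_of ffunE inordK // ltnS max_card.
have adm0 : admissible n (mat_of c0).
  apply/andP; split; apply/forallP => j.
    by rewrite (eq_bigr (fun i => pmat p s i j)) ?pmat_col ?hP // => i _; rewrite c0E.
  by rewrite (eq_bigr (fun i => pmat p s j i)) ?pmat_row ?hP // => i _; rewrite c0E.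
have sdc c : (s \in dcoset p (mat_of c)) = (c == c0).
  rewrite inE; apply/idP/eqP.
    move=> /forallP H; apply/ffunP => [[i k]]; apply: val_inj.
    move: (H i) => /forallP /(_ k) /eqP E.
    by rewrite /= -[RHS]/(mat_of c0 i k) c0E E.
  by move=> ->; apply/forallP => i; apply/forallP => k; rewrite c0E.
rewrite [RHS](bigD1 c0) //= [X in _ + X]big1 ?addr0; last first.
  move=> c /andP[_ nc]; by rewrite ffunE sdc (negbTE nc) mulr0.
rewrite ffunE sdc eqxx.
set Ds := [set g | (g \in dcoset p a) && ((g^-1 * s)%g \in dcoset p b)].
rewrite (eq_bigr (fun g => if g \in Ds then
   (#|dcoset p a|%:R^-1 * #|dcoset p b|%:R^-1 : algC) else 0)); last first.
  move=> g _; rewrite !ffunE [g \in Ds]inE.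
  by case: (g \in dcoset p a); case: ((g^-1 * s)%g \in dcoset p b); rewrite /= ?mulr0 ?mul0r.
rewrite -big_mkcond sumr_const -(mulr_natr _ #|Ds|).
have eD : #|Ds| = (\sum_(t | tcond a b (pmat p s) t) #|Gt p s t|)%N by exact: D1.
have tcE (t : {ffun _ -> 'I_#|T|.+1}) : tcond a b (mat_of c0) t = tcond a b (pmat p s) t.
  by rewrite /tcond; congr [&& _, _ & _]; apply: eq_forallb => i; apply: eq_forallb => k; rewrite c0E.
rewrite (eq_bigl _ _ tcE) eD natr_sum.
set Nc : algC := (\prod_i \prod_k (pmat p s i k)`!)%N%:R.
set Nn : algC := (\prod_j (n j)`!)%N%:R.
set Na : algC := (\prod_i \prod_j (a i j)`!)%N%:R.
set Nb : algC := (\prod_i \prod_j (b i j)`!)%N%:R.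
have Ncn : Nc != 0 by exact: prodfact_neq0.
have Nnn : Nn != 0 by exact: prodfact1_neq0.
have Nan : Na != 0 by exact: prodfact_neq0.
have Nbn : Nb != 0 by exact: prodfact_neq0.
rewrite [in LHS](eq_bigr (fun t : {ffun _ -> 'I_#|T|.+1} => Nc * Nn * ((\prod_i \prod_j \prod_k (t (i, j, k))`!)%N%:R)^-1)); last first.
  move=> t tc; rewrite /Nc /Nn -natrM -(D2 hP ha tc) natrM mulfK //.
  by rewrite pnatr_eq0 -lt0n; apply: prodn_gt0 => i; apply: prodn_gt0 => j; apply: prodn_gt0 => k; exact: fact_gt0.
rewrite -mulr_sumr.
have Ea : (#|dcoset p a|%:R : algC) = Nn * Nn / Na.
  by apply: (canRL (mulfK Nan)); rewrite /Na /Nn -!natrM (mu_lemma hP ha).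
have Eb : (#|dcoset p b|%:R : algC) = Nn * Nn / Nb.
  by apply: (canRL (mulfK Nbn)); rewrite /Nb /Nn -!natrM (mu_lemma hP hb).
have Ec : (#|dcoset p (mat_of c0)|%:R : algC) = Nn * Nn / Nc.
  apply: (canRL (mulfK Ncn)); rewrite /Nc /Nn -!natrM -(mu_lemma hP adm0).
  by congr (_ * _)%N%:R; apply: eq_bigr => i _; apply: eq_bigr => k _; rewrite c0E.
rewrite Ea Eb Ec natrM -/Na.
set X := \sum_(t | _) _.
field.
by rewrite Nan Nbn Ncn Nnn.
Qed.
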